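(* In the semi-discrete wave setting described in the context, assume that the reference state $u$ satisfies the discrete non-degeneracy condition: for all $t>0$ and all $j\in\{1,\dots,N-1\}$, $\frac12u_{(2,j)}(t)-2u_{(1,j)}(t)\neq0$. Let $Z_d=U_0(T)=(u(T),\partial_tu(T))$. Then there exist a neighborhood $\mathcal{V}(0)\subset C([0,T];W_h)$ of $0$ and a neighborhood $\mathcal{V}(Z_d)\subset\mathcal{F}(\mathring\Omega_h)^2$ of $Z_d$ such that for every $Z\in\mathcal{V}(Z_d)$ there exists $\varphi\in\mathcal{V}(0)$ with $U_\varphi(T)=Z$.
   Context: Let $h>0$, integers $M,N\ge2$, grid $\Omega_h=\{(ih,jh):0\le i\le M,0\le j\le N\}$ with nodes indexed $(i,j)$, interior $\mathring\Omega_h=\{1\le i\le M-1,1\le j\le N-1\}$, $\Gamma^1=\{(1,j):1\le j\le N-1\}$; $\mathcal{F}(\mathring\Omega_h)$ is the space of real functions on $\mathring\Omega_h$, extended by $0$ on boundary nodes. For $j=1,\dots,N-1$, $V_j$ equals $(1,0)$ at boundary node $(0,j)$ and $0$ elsewhere, $W_h=\mathrm{span}(V_j)$. Admissible perturbations are $\varphi(t)=\sum_{j=1}^{N-1}h\lambda_j(t)V_j$ with $\lambda_j\in W^{1,\infty}(\mathbb{R}^+)\cap C^1(\mathbb{R}^+)$, $\sup_j\|\lambda_j\|_\infty<1/2$ and $\|\partial_t\lambda_j\|_\infty<1$. $A(\varphi)$ is the operator $[A(\varphi)\phi]_{(i,j)}=h^{-2}(4\phi_{(i,j)}-\phi_{(i+1,j)}-\phi_{(i-1,j)}-\phi_{(i,j+1)}-\phi_{(i,j-1)})$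 for $(i,j)\notin\Gamma^1$ and $[A(\varphi)\phi]_{(1,j)}=h^{-2}\big(2(1+\frac{1}{1+\lambda_j(t)})\phi_{(1,j)}-\frac{2}{2+\lambda_j(t)}\phi_{(2,j)}-\phi_{(1,j+1)}-\phi_{(1,j-1)}\big)$. Given a source $F$ and data $u_0,u_1\in\mathcal{F}(\mathring\Omega_h)$, the perturbed state $u_\varphi$ solves $\partial_t^2u_\varphi+A(\varphi)u_\varphi=F$, $u_\varphi(0)=u_0$, $\partial_tu_\varphi(0)=u_1$, and $U_\varphi=(u_\varphi,\partial_tu_\varphi)$. The reference state is $u=u_{\varphi=0}$ and $U_0=(u,\partial_tu)$. $T>0$ is fixed. *)

(* Defs.v *)
From Stdlib Require Import Reals Lra Lia.
From Coquelicot Require Import Coquelicot.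
Open Scope R_scope.

(* Grid functions: values at nodes (i,j); only nodes of the grid matter. *)
Definition grid := nat -> nat -> R.

Definition inner_node (M N i j : nat) : Prop :=
  (1 <= i <= M - 1)%nat /\ (1 <= j <= N - 1)%nat.

Definition interiorb (M N i j : nat) : bool :=
  (Nat.leb 1 i && Nat.leb i (M - 1) && Nat.leb 1 j && Nat.leb j (N - 1))%bool.

Definition ext (M N : nat) (u : grid) : grid :=
  fun i j => if interiorb M N i j then u i j else 0.

(* [A(phi) p]_(i,j), phi = sum_j h lam_j V_j ; lam : nat -> R gives lam_j (at a fixed time);
   p is the (zero-extended) grid function *)
Definition Aop (h : R) (lam : nat -> R) (p : grid) : grid :=
  fun i j =>
    if Nat.eqb i 1 then
      / (h ^ 2) * (2 * (1 + 1 / (1 + lam j)) * p 1%nat j - 2 / (2 + lam j) * p 2%nat j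
                   - p 1%nat (j + 1)%nat - p 1%nat (j - 1)%nat)
    else
      / (h ^ 2) * (4 * p i j - p (i + 1)%nat j - p (i - 1)%nat j
                   - p i (j + 1)%nat - p i (j - 1)%nat).

Definition solves_on (D : R -> Prop) (M N : nat) (h : R) (F : R -> grid)
    (lam : R -> nat -> R) (u0 u1 : grid) (w dw : R -> grid) : Prop :=
  forall i j, inner_node M N i j ->
    w 0 i j = u0 i j /\ dw 0 i j = u1 i j /\
    forall t, D t ->
      exists a : R,
        is_derive (fun s => w s i j) t (dw t i j) /\
        is_derive (fun s => dw s i j) t a /\
        a + Aop h (lam t) (ext M N (w t)) i j = F t i j.

Definition admissible (N : nat) (lam : R -> nat -> R) : Prop :=
  (exists c, c < / 2 /\
     forall j, (1 <= j <= N - 1)%nat -> forall t, 0 <= t -> Rabs (lam t j) <= c) /\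
  (forall j, (1 <= j <= N - 1)%nat ->
     exists dl : R -> R,
       (forall t, 0 <= t -> is_derive (fun s => lam s j) t (dl t)) /\
       continuous_on (fun t => 0 <= t) dl /\
       (exists c, c < 1 /\ forall t, 0 <= t -> Rabs (dl t) <= c)).

(* V0 is a neighborhood of 0 in C([0,T]; W_h); an element of W_h is represented by its
   coordinates (g_j)_{j=1..N-1} in the basis (V_j), sup norm over [0,T] and j. *)
Definition nbhd0 (N : nat) (T : R) (V0 : (R -> nat -> R) -> Prop) : Prop :=
  exists eps, 0 < eps /\
    forall g : R -> nat -> R,
      (forall j, (1 <= j <= N - 1)%nat -> continuous_on (fun t => 0 <= t <= T) (fun t => g t j)) ->
      (forall t j, 0 <= t <= T -> (1 <= j <= N - 1)%nat -> Rabs (g t j) < eps) ->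
      V0 g.

Definition nbhdZ (M N : nat) (Zd : grid * grid) (VZ : grid * grid -> Prop) : Prop :=
  exists del, 0 < del /\
    forall Z : grid * grid,
      (forall i j, inner_node M N i j ->
         Rabs (fst Z i j - fst Zd i j) < del /\ Rabs (snd Z i j - snd Zd i j) < del) ->
      VZ Z.

(* Main.v *)
Require Import Defs.
From Stdlib Require Import Reals Lra Lia List Classical.
From Coquelicot Require Import Coquelicot.
Open Scope R_scope.

Lemma dplus (f g : R -> R) (x a b : R) : is_derive f x a -> is_derive g x b ->
  is_derive (fun t => f t + g t) x (a + b).
Proof. intros; apply (is_derive_plus f g); auto. Qed.
Lemma dminus (f g : R -> R) (x a b : R) : is_derive f x a -> is_derive g x b ->
  is_derive (fun t => f t - g t) x (a - b).
Proof. intros; apply (is_derive_minus f g); auto. Qed.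
Lemma dmult (f g : R -> R) (x a b : R) : is_derive f x a -> is_derive g x b ->
  is_derive (fun t => f t * g t) x (a * g x + f x * b).
Proof. intros; apply (is_derive_mult f g); auto. intros; apply Rmult_comm. Qed.
Lemma dscal (f : R -> R) (x c a : R) : is_derive f x a ->
  is_derive (fun t => c * f t) x (c * a).
Proof. intros; apply is_derive_scal; auto. Qed.
Lemma dconst (c : R) (x : R) : is_derive (fun _ => c) x 0.
Proof. apply (is_derive_const (K:=R_AbsRing) (V:=R_NormedModule) c x). Qed.
Lemma did (x : R) : is_derive (fun t => t) x 1.
Proof. apply (is_derive_id (K:=R_AbsRing) x). Qed.
Lemma dext (f g : R -> R) (x a b : R) : is_derive f x a -> (forall t, f t = g t) -> a = b ->
  is_derive g x b.
Proof. intros H E ->. apply (is_derive_ext f g); auto. Qed.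
Lemma dext_loc (f g : R -> R) (x a : R) : is_derive f x a ->
  (exists e, 0 < e /\ forall t, Rabs (t - x) < e -> f t = g t) -> is_derive g x a.
Proof. intros H [e [He E]]. apply (is_derive_ext_loc f g); auto.
  exists (mkposreal e He). intros y Hy. apply E. apply Hy. Qed.
Lemma dcont (f : R -> R) (x a : R) : is_derive f x a -> continuous f x.
Proof. intros H. apply (ex_derive_continuous (V:=R_NormedModule)). exists a; auto. Qed.
Lemma dcontpt (f : R -> R) (x a : R) : is_derive f x a -> continuity_pt f x.
Proof. intros H. apply continuity_pt_filterlim. apply (dcont f x a H). Qed.

Lemma djunction (f f1 f2 : R -> R) a L :
  is_derive f1 a L -> is_derive f2 a L ->
  (forall x, x <= a -> f x = f1 x) -> (forall x, a <= x -> f x = f2 x) ->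
  is_derive f a L.
Proof.
  intros H1 H2 E1 E2. apply is_derive_Reals. apply is_derive_Reals in H1, H2.
  intros eps Heps. destruct (H1 eps Heps) as [d1 Hd1]. destruct (H2 eps Heps) as [d2 Hd2].
  assert (Hd: 0 < Rmin d1 d2) by (apply Rmin_pos; [apply d1|apply d2]).
  exists (mkposreal _ Hd). intros h Hh0 Hh. simpl in Hh.
  destruct (Rle_dec (a + h) a).
  - rewrite E1, (E1 a) by lra. apply Hd1; auto. eapply Rlt_le_trans; [apply Hh| apply Rmin_l].
  - rewrite E2, (E2 a) by lra. apply Hd2; auto. eapply Rlt_le_trans; [apply Hh| apply Rmin_r].
Qed.

Definition pp (a : nat) (x : R) : R := if Rle_dec x 0 then 0 else x ^ a.

Lemma pp_le0 a x : x <= 0 -> pp a x = 0.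
Proof. unfold pp; destruct (Rle_dec x 0); lra. Qed.
Lemma pp_pos a x : 0 < x -> pp a x = x ^ a.
Proof. unfold pp; destruct (Rle_dec x 0); lra. Qed.

Lemma dpp a x : (2 <= a)%nat -> is_derive (pp a) x (INR a * pp (a - 1) x).
Proof.
  intros Ha.
  destruct (Rlt_dec x 0) as [Hx|Hx]; [|destruct (Rlt_dec 0 x) as [Hx'|Hx']].
  - apply dext_loc with (fun _ => 0).
    + rewrite pp_le0 by lra. replace (INR a * 0) with 0 by ring. apply dconst.
    + exists (-x); split; [lra|]. intros t Ht. rewrite pp_le0; auto.
      apply Rabs_def2 in Ht; lra.
  - apply dext_loc with (fun t => t ^ a).
    + rewrite pp_pos by lra. eapply dext. apply is_derive_pow, did. reflexivity.
      replace (Init.Nat.pred a) with (a - 1)%nat by lia. rewrite Rmult_1_r; reflexivity.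
    + exists x; split; [lra|]. intros t Ht. rewrite pp_pos; auto.
      apply Rabs_def2 in Ht; lra.
  - assert (x = 0) by lra. subst x. rewrite pp_le0 by lra. replace (INR a * 0) with 0 by ring.
    apply djunction with (fun _ => 0) (fun t => t ^ a).
    + apply dconst.
    + eapply dext. apply is_derive_pow, did. reflexivity.
      replace (Init.Nat.pred a) with (S (a - 2))%nat by lia. simpl. rewrite Rmult_0_l, Rmult_0_r. reflexivity.
    + intros; apply pp_le0; auto.
    + intros y Hy. destruct (Req_dec y 0). subst. rewrite pp_le0 by lra.
      rewrite pow_i; auto; lia. apply pp_pos; lra.
Qed.

Module P2M.
Import ListNotations.

Ltac rring := match goal with |- ?x = ?y => change (@eq R x y) end; ring.

Section Terms.
Variables t0 tT : R.

Definition term := (R * nat * nat)%type.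
Definition tval (x : term) (t : R) : R :=
  let '(c, a, b) := x in c * pp a (t - t0) * (t - tT) ^ b.
Fixpoint eval (l : list term) (t : R) : R :=
  match l with [] => 0 | x :: l' => tval x t + eval l' t end.
Definition tder (x : term) : list term :=
  let '(c, a, b) := x in [(c * INR a, (a - 1)%nat, b); (c * INR b, a, (b - 1)%nat)].
Fixpoint deriv (l : list term) : list term :=
  match l with [] => [] | x :: l' => tder x ++ deriv l' end.
Definition ta (x : term) : nat := let '(_, a, _) := x in a.

Lemma eval_app l1 l2 t : eval (l1 ++ l2) t = eval l1 t + eval l2 t.
Proof. induction l1; simpl; [ring|]. rewrite IHl1; ring. Qed.
Lemma deriv_app l1 l2 : deriv (l1 ++ l2) = deriv l1 ++ deriv l2.
Proof. induction l1; simpl; auto. rewrite IHl1, app_assoc; auto. Qed.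

Lemma d_tval x (t : R) : (2 <= ta x)%nat -> is_derive (tval x) t (eval (tder x) t).
Proof.
  destruct x as [[c a] b]. simpl. intros Ha.
  assert (H1 : is_derive (fun s => pp a (s - t0)) t (INR a * pp (a - 1) (t - t0))).
  { eapply dext. apply (is_derive_comp (pp a) (fun s => s - t0)).
    apply dpp; auto. eapply dext. apply dminus. apply did. apply dconst. intros; reflexivity.
    reflexivity. intros; reflexivity. simpl. unfold scal; simpl. unfold mult; simpl. now rewrite Rminus_0_r, Rmult_1_l. }
  assert (H2 : is_derive (fun s => (s - tT) ^ b) t (INR b * (t - tT) ^ (b - 1))).
  { eapply dext. apply is_derive_pow. apply dminus. apply did. apply dconst.
    intros; reflexivity. replace (Init.Nat.pred b) with (b - 1)%nat by lia. rewrite Rminus_0_r, Rmult_1_r; reflexivity. }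
  eapply dext. apply dmult. apply dscal. apply H1. apply H2. intros; reflexivity.
  simpl. ring.
Qed.

Lemma d_eval l (t : R) : List.Forall (fun x => (2 <= ta x)%nat) l -> is_derive (eval l) t (eval (deriv l) t).
Proof.
  induction l as [|x l IH]; intros HF; simpl.
  - apply dconst.
  - inversion HF; subst. eapply dext. apply dplus. apply (d_tval x t H1). apply (IH H2).
    intros; reflexivity. rewrite eval_app; reflexivity.
Qed.

Lemma deriv_minA l k : List.Forall (fun x => (k <= ta x)%nat) l -> List.Forall (fun x => (k - 1 <= ta x)%nat) (deriv l).
Proof.
  induction l as [|x l IH]; intros HF; simpl; auto.
  inversion HF; subst. apply Forall_app; split; auto.
  destruct x as [[c a] b]; simpl in *. repeat constructor; simpl; lia.
Qed.

Definition dn (m : nat) (l : list term) := Nat.iter m deriv l.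

Lemma dn_S m l : dn (S m) l = dn m (deriv l).
Proof. unfold dn. induction m; simpl; auto. simpl in IHm. rewrite <- IHm. reflexivity. Qed.
Lemma dn_app m l1 l2 : dn m (l1 ++ l2) = dn m l1 ++ dn m l2.
Proof. revert l1 l2. induction m; intros; simpl; auto. unfold dn in *; simpl.
  rewrite IHm. apply deriv_app. Qed.
Lemma dn_two m x y : dn m [x; y] = dn m [x] ++ dn m [y].
Proof. apply (dn_app m [x] [y]). Qed.
Lemma dn_minA m l k : List.Forall (fun x => (k <= ta x)%nat) l -> List.Forall (fun x => (k - m <= ta x)%nat) (dn m l).
Proof. revert k. induction m; intros k H; simpl.
  - eapply Forall_impl; [|apply H]. intros ? Hx; cbv beta in *; lia.
  - unfold dn; simpl. fold (dn m l). pose proof (deriv_minA _ _ (IHm k H)) as H0.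
    eapply Forall_impl; [|apply H0]. intros ? Hx; cbv beta in *; lia. Qed.

Lemma eval_zero l t : t <= t0 -> eval l t = 0.
Proof. intros Ht. induction l as [|[[c a] b] l IH]; simpl; auto.
  rewrite IH, pp_le0 by lra. ring. Qed.

Lemma jet_lt m : forall a b c, (m < b)%nat -> eval (dn m [(c, a, b)]) tT = 0.
Proof.
  induction m; intros a b c Hb.
  - simpl. replace (tT - tT) with 0 by ring. rewrite pow_i by lia. ring.
  - rewrite dn_S. simpl. rewrite dn_two, eval_app, !IHm by lia. ring.
Qed.

Lemma jet_eq b : forall a c, eval (dn b [(c, a, b)]) tT = c * INR (Factorial.fact b) * pp a (tT - t0).
Proof.
  induction b; intros a c.
  - simpl. ring.
  - rewrite dn_S. simpl. rewrite dn_two, eval_app, jet_lt by lia. replace (b - 0)%nat with b by lia. rewrite IHb.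
    change (match b with 0%nat => 1 | S _ => INR b + 1 end) with (INR (S b)). rewrite plus_INR, mult_INR, S_INR. ring.
Qed.

End Terms.

End P2M.
Import P2M.

Module P3M.
Import ListNotations.

Lemma bounded_cont (f : R -> R) a b : a <= b -> (forall c, a <= c <= b -> continuity_pt f c) ->
  exists B, forall c, a <= c <= b -> Rabs (f c) <= B.
Proof.
  intros Hab Hc. destruct (continuity_ab_maj (fun x => Rabs (f x)) a b Hab) as [m [Hm _]].
  intros c Hc'. apply continuity_pt_comp with (f1 := f) (f2 := Rabs); auto.
  apply Rcontinuity_abs.
  exists (Rabs (f m)). intros c Hc'. apply (Hm c Hc').
Qed.

Lemma bounded_fam (f : nat -> R -> R) (P : R -> Prop) n :
  (forall k, (k < n)%nat -> exists B, forall t, P t -> Rabs (f k t) <= B) ->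
  exists B, 0 <= B /\ forall k, (k < n)%nat -> forall t, P t -> Rabs (f k t) <= B.
Proof.
  induction n; intros H.
  - exists 0. split; [lra|]. intros; lia.
  - destruct IHn as [B1 [HB1 H1]]. intros; apply H; lia.
    destruct (H n) as [B2 H2]; [lia|].
    exists (Rmax B1 B2). split. eapply Rle_trans; [apply HB1|apply Rmax_l].
    intros k Hk t Ht. destruct (Nat.eq_dec k n). subst. eapply Rle_trans; [apply H2; auto|apply Rmax_r].
    eapply Rle_trans; [apply H1; auto; lia|apply Rmax_l].
Qed.

Section Towers.
Variables t0 tT ia ib : R.
Variable Dm : nat.
Hypothesis HS : t0 < tT.
Hypothesis Hab : ia <= tT <= ib.

Definition KK := (Dm + 3)%nat.
Definition psi (p k : nat) (t : R) : R := eval t0 tT (dn k [(1, KK, p)]) t.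

Lemma dpsi p k t : (k < Dm)%nat -> is_derive (psi p k) t (psi p (S k) t).
Proof.
  intros Hk. unfold psi. change (dn (S k) [(1, KK, p)]) with (deriv (dn k [(1, KK, p)])).
  apply d_eval. pose proof (dn_minA k [(1, KK, p)] KK) as H.
  assert (H0 : List.Forall (fun x => (KK <= P2M.ta x)%nat) [(1, KK, p)]) by (repeat constructor).
  specialize (H H0). eapply Forall_impl; [|apply H]. intros ? Hx; cbv beta in *; unfold KK in *; lia.
Qed.

Lemma psi_zero p k t : t <= t0 -> psi p k t = 0.
Proof. intros; apply eval_zero; auto. Qed.

Lemma psi_lt p k : (k < p)%nat -> psi p k tT = 0.
Proof. intros; apply jet_lt; auto. Qed.

Lemma psi_eq p : psi p p tT = INR (Factorial.fact p) * (tT - t0) ^ KK.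
Proof. unfold psi. rewrite jet_eq. rewrite pp_pos by lra. ring. Qed.

Lemma psi_bound p : exists B, 0 <= B /\ forall k, (k < Dm)%nat -> forall t, ia <= t <= ib -> Rabs (psi p k t) <= B.
Proof.
  apply bounded_fam. intros k Hk. apply bounded_cont. lra.
  intros c _. eapply dcontpt. apply dpsi; auto.
Qed.

Definition fden (q : nat) := INR (Factorial.fact q) * (tT - t0) ^ KK.
Lemma fden_pos q : 0 < fden q.
Proof. unfold fden. apply Rmult_lt_0_compat. apply lt_0_INR, Factorial.lt_O_fact.
  apply pow_lt; lra. Qed.

Fixpoint Yb (J : nat -> nat -> R) (p : nat) : R -> nat -> nat -> R :=
  match p with
  | O => fun _ _ _ => 0
  | S q => fun t k j => Yb J q t k j + (J q j - Yb J q tT q j) / fden q * psi q k t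
  end.

Lemma Yb_der J p k j t : (k < Dm)%nat -> is_derive (fun s => Yb J p s k j) t (Yb J p t (S k) j).
Proof.
  intros Hk. induction p; simpl.
  - apply dconst.
  - apply dplus; auto. apply dscal. apply dpsi; auto.
Qed.

Lemma Yb_zero J p k j t : t <= t0 -> Yb J p t k j = 0.
Proof. intros Ht. induction p; simpl; auto. rewrite IHp, psi_zero; auto. ring. Qed.

Lemma Yb_jet J p k j : (k < p)%nat -> Yb J p tT k j = J k j.
Proof.
  induction p; intros Hk; [lia|]. simpl.
  destruct (Nat.eq_dec k p).
  - subst. rewrite psi_eq. fold (fden p). field. apply Rgt_not_eq, fden_pos.
  - rewrite IHp by lia. rewrite psi_lt by lia. ring.
Qed.

Lemma Yb_bound p : (p <= Dm)%nat -> exists C, 0 <= C /\ forall J beta,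
  (forall k j, Rabs (J k j) <= beta) ->
  forall t, ia <= t <= ib -> forall k j, (k < Dm)%nat -> Rabs (Yb J p t k j) <= C * beta.
Proof.
  induction p; intros Hp.
  - exists 0. split; [lra|]. intros J beta HJ t Ht k j Hk. simpl.
    rewrite Rabs_R0. assert (0 <= beta) by (eapply Rle_trans; [apply Rabs_pos|apply (HJ 0%nat 0%nat)]).
    lra.
  - destruct IHp as [C [HC H]]; [lia|]. destruct (psi_bound p) as [B [HB HBp]].
    exists (C + (1 + C) / fden p * B). split.
    { apply Rplus_le_le_0_compat; auto. apply Rmult_le_pos; auto.
      apply Rmult_le_pos; [lra|]. apply Rlt_le, Rinv_0_lt_compat, fden_pos. }
    intros J beta HJ t Ht k j Hk. simpl.
    assert (Hb0 : 0 <= beta) by (eapply Rle_trans; [apply Rabs_pos|apply (HJ 0%nat 0%nat)]).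
    assert (H1 := H J beta HJ t Ht k j Hk).
    assert (H2 := H J beta HJ tT ltac:(lra) p j ltac:(lia)).
    assert (H3 := HBp k Hk t Ht).
    assert (H4 := HJ p j).
    pose proof (fden_pos p) as Hf.
    eapply Rle_trans. apply Rabs_triang.
    rewrite Rabs_mult. unfold Rdiv. rewrite Rabs_mult, (Rabs_right (/ fden p)) by (apply Rle_ge, Rlt_le, Rinv_0_lt_compat; auto).
    assert (Rabs (J p j - Yb J p tT p j) <= (1 + C) * beta).
    { eapply Rle_trans. apply Rabs_triang. rewrite Rabs_Ropp. lra. }
    assert (0 <= / fden p) by (apply Rlt_le, Rinv_0_lt_compat; auto).
    assert (Rabs (J p j - Yb J p tT p j) * / fden p * Rabs (psi p k t) <= (1 + C) * beta * / fden p * B).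
    { apply Rmult_le_compat; try apply Rmult_le_pos; try apply Rabs_pos; auto.
      apply Rmult_le_compat_r; auto. }
    nra.
Qed.

End Towers.

End P3M.
Import P3M.

Section Cols.
Variable h : R.
Variable N : nat.
Hypothesis Hh : 0 < h.

Definition jin (j : nat) : bool := (Nat.leb 1 j && Nat.leb j (N - 1))%bool.
Definition sh (c : nat -> nat -> R) (k j : nat) : R := if jin j then c k j else 0.
Definition step (c cp : nat -> nat -> R) (k j : nat) : R :=
  h ^ 2 * c (k + 2)%nat j + 4 * c k j - cp k j - sh c k (j + 1) - sh c k (j - 1).
Fixpoint colpair (Y : nat -> nat -> R) (n : nat) : (nat -> nat -> R) * (nat -> nat -> R) :=
  match n with
  | O => (Y, fun _ _ => 0)
  | S n' => (step (fst (colpair Y n')) (snd (colpair Y n')), fst (colpair Y n'))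
  end.
Definition col Y n := fst (colpair Y n).
Definition colp Y n := snd (colpair Y n).

Lemma col_S Y n k j : col Y (S n) k j = step (col Y n) (colp Y n) k j.
Proof. reflexivity. Qed.
Lemma colp_S Y n k j : colp Y (S n) k j = col Y n k j.
Proof. reflexivity. Qed.
Lemma colp_0 Y k j : colp Y 0 k j = 0.
Proof. reflexivity. Qed.
Lemma col_0 Y k j : col Y 0 k j = Y k j.
Proof. reflexivity. Qed.

Lemma col_der (Yt : R -> nat -> nat -> R) Dm t :
  (forall k j s, (k < Dm)%nat -> is_derive (fun s => Yt s k j) s (Yt s (S k) j)) ->
  forall n k j, (k + 2 * n < Dm)%nat ->
    is_derive (fun s => col (Yt s) n k j) t (col (Yt t) n (S k) j) /\
    is_derive (fun s => colp (Yt s) n k j) t (colp (Yt t) n (S k) j).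
Proof.
  intros HY n. induction n; intros k j Hk.
  - split. apply HY; lia. unfold colp; simpl; apply dconst.
  - split.
    + unfold col at 2; simpl. fold (col (Yt t) n). fold (colp (Yt t) n).
      unfold step. replace (S k + 2)%nat with (S (k + 2)) by lia.
      apply dminus. apply dminus. apply dminus. apply dplus.
      apply dscal. apply IHn; lia. apply dscal. apply IHn; lia. apply IHn; lia.
      unfold sh. destruct (jin (j+1)). apply IHn; lia. apply dconst.
      unfold sh. destruct (jin (j-1)). apply IHn; lia. apply dconst.
    + apply IHn; lia.
Qed.

Lemma abs5 a b c d e : Rabs (a + b - c - d - e) <= Rabs a + Rabs b + Rabs c + Rabs d + Rabs e.
Proof. unfold Rabs; repeat destruct Rcase_abs; lra. Qed.

Lemma col_bound Y Q beta : (forall k j, (k <= Q)%nat -> Rabs (Y k j) <= beta) ->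
  forall n k j, (k + 2 * n <= Q)%nat ->
    Rabs (col Y n k j) <= (h ^ 2 + 7) ^ n * beta /\ Rabs (colp Y n k j) <= (h ^ 2 + 7) ^ n * beta.
Proof.
  intros HY. assert (Hb : 0 <= beta) by (eapply Rle_trans; [apply Rabs_pos|apply (HY 0%nat 0%nat); lia]).
  assert (Hh2 : 0 <= h ^ 2) by (apply pow2_ge_0).
  induction n; intros k j Hk.
  - simpl. rewrite Rmult_1_l. split. apply HY; lia. unfold colp; simpl; rewrite Rabs_R0; auto.
  - assert (Hp : 1 <= (h^2+7)^n) by (apply pow_R1_Rle; lra).
    destruct (IHn (k+2)%nat j ltac:(lia)) as [A1 _].
    destruct (IHn k j ltac:(lia)) as [A2 A3].
    assert (A4 : Rabs (sh (col Y n) k (j+1)) <= (h ^ 2 + 7) ^ n * beta).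
    { unfold sh; destruct (jin (j+1)). apply IHn; lia. rewrite Rabs_R0. apply Rmult_le_pos; lra. }
    assert (A5 : Rabs (sh (col Y n) k (j-1)) <= (h ^ 2 + 7) ^ n * beta).
    { unfold sh; destruct (jin (j-1)). apply IHn; lia. rewrite Rabs_R0. apply Rmult_le_pos; lra. }
    split.
    + rewrite col_S. unfold step.
      replace ((h ^ 2 + 7) ^ S n) with ((h^2+7) * (h^2+7)^n) by (simpl; ring).
      set (P := (h^2+7)^n) in *.
      assert (Rabs (h ^ 2 * col Y n (k + 2)%nat j) <= h^2 * (P * beta)).
      { rewrite Rabs_mult, Rabs_right by lra. apply Rmult_le_compat_l; lra. }
      assert (Rabs (4 * col Y n k j) <= 4 * (P * beta)).
      { rewrite Rabs_mult, Rabs_right by lra. apply Rmult_le_compat_l; lra. }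
      eapply Rle_trans. apply abs5. nra.
    + rewrite colp_S. replace ((h ^ 2 + 7) ^ S n) with ((h^2+7) * (h^2+7)^n) by (simpl; ring).
      assert (0 <= (h^2+7)^n * beta) by (apply Rmult_le_pos; lra). nra.
Qed.

Definition addJ (J : nat -> nat -> R) (p : nat) (c : nat -> R) : nat -> nat -> R :=
  fun k j => J k j + (if Nat.eqb k p then c j else 0).

Lemma col_add J p c : forall n k j, (k + 2 * n <= p)%nat ->
  col (addJ J p c) n k j = col J n k j + (if Nat.eqb (k + 2 * n) p then h ^ (2 * n) * c j else 0) /\
  colp (addJ J p c) n k j = colp J n k j.
Proof.
  induction n; intros k j Hk.
  - split. rewrite !col_0. unfold addJ. replace (k + 2 * 0)%nat with k by lia.
    destruct (Nat.eqb k p); simpl; ring. reflexivity.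
  - split.
    + rewrite !col_S. unfold step.
      destruct (IHn (k+2)%nat j ltac:(lia)) as [E1 _]. rewrite E1.
      destruct (IHn k j ltac:(lia)) as [E2 E3]. rewrite E2, E3.
      assert (Nat.eqb (k + 2 * n) p = false) by (apply Nat.eqb_neq; lia).
      rewrite H.
      assert (E4 : forall j', sh (col (addJ J p c) n) k j' = sh (col J n) k j').
      { intros j'. unfold sh. destruct (jin j'); auto. destruct (IHn k j' ltac:(lia)) as [E _].
        rewrite E, H. ring. }
      rewrite !E4. replace (k + 2 + 2 * n)%nat with (k + 2 * S n)%nat by lia.
      destruct (Nat.eqb (k + 2 * S n) p).
      * replace (2 * S n)%nat with (S (S (2 * n))) by lia. simpl. ring.
      * ring.
    + rewrite !colp_S. destruct (IHn k j ltac:(lia)) as [E _]. rewrite E.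
      assert (Nat.eqb (k + 2 * n) p = false) by (apply Nat.eqb_neq; lia). rewrite H. ring.
Qed.

Lemma col_dep Y1 Y2 Q : (forall k j, (k <= Q)%nat -> Y1 k j = Y2 k j) ->
  forall n k j, (k + 2 * n <= Q)%nat -> col Y1 n k j = col Y2 n k j /\ colp Y1 n k j = colp Y2 n k j.
Proof.
  intros HY. induction n; intros k j Hk.
  - split. apply HY; lia. reflexivity.
  - split.
    + rewrite !col_S. unfold step, sh.
      destruct (IHn (k+2)%nat j ltac:(lia)) as [E1 _]. destruct (IHn k j ltac:(lia)) as [E2 E3].
      rewrite E1, E2, E3. destruct (jin (j+1)), (jin (j-1)); try rewrite (proj1 (IHn k (j+1)%nat ltac:(lia)));
      try rewrite (proj1 (IHn k (j-1)%nat ltac:(lia))); reflexivity.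
    + rewrite !colp_S. apply IHn; lia.
Qed.

Fixpoint Jup (X : nat -> nat -> nat -> R) (p : nat) : nat -> nat -> R :=
  match p with
  | O => fun _ _ => 0
  | S q => addJ (Jup X q) q
      (fun j => (X (q / 2)%nat (q mod 2)%nat j - col (Jup X q) (q / 2)%nat (q mod 2)%nat j) / h ^ (2 * (q / 2))%nat)
  end.

Lemma Jup_ok X p : forall n o j, (o <= 1)%nat -> (2 * n + o < p)%nat -> col (Jup X p) n o j = X n o j.
Proof.
  induction p; intros n o j Ho Hp; [lia|].
  destruct (col_add (Jup X p) p
      (fun j => (X (p / 2)%nat (p mod 2)%nat j - col (Jup X p) (p / 2)%nat (p mod 2)%nat j) / h ^ (2 * (p / 2))%nat)
      n o j ltac:(lia)) as [E _].
  etransitivity; [exact E|]. destruct (Nat.eqb (o + 2 * n) p) eqn:Ep.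
  - apply Nat.eqb_eq in Ep. assert (p / 2 = n)%nat by (symmetry; apply (Nat.div_unique p 2 n o); lia).
    assert (p mod 2 = o)%nat by (symmetry; apply (Nat.mod_unique p 2 n o); lia).
    rewrite H, H0. field. apply pow_nonzero. lra.
  - rewrite IHp; auto. ring. apply Nat.eqb_neq in Ep. lia.
Qed.

Fixpoint CJ (p : nat) : R :=
  match p with O => 0 | S q => CJ q + (1 + (h ^ 2 + 7) ^ (q / 2)%nat * CJ q) / h ^ (2 * (q / 2))%nat end.

Lemma CJ_pos p : 0 <= CJ p.
Proof. induction p; simpl. lra. apply Rplus_le_le_0_compat; auto. unfold Rdiv.
  apply Rmult_le_pos. apply Rplus_le_le_0_compat. lra. apply Rmult_le_pos; auto. apply pow_le.
  assert (0 <= h^2) by apply pow2_ge_0. lra. apply Rlt_le, Rinv_0_lt_compat, pow_lt; lra. Qed.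

Lemma Jup_bound X zeta p : 0 <= zeta -> (forall n o j, Rabs (X n o j) <= zeta) ->
  forall k j, Rabs (Jup X p k j) <= CJ p * zeta.
Proof.
  intros Hz HX. induction p; intros k j; cbn [Jup CJ].
  - rewrite Rabs_R0. lra.
  - unfold addJ. eapply Rle_trans. apply Rabs_triang. rewrite Rmult_plus_distr_r.
    apply Rplus_le_compat. apply IHp.
    destruct (Nat.eqb k p).
    + unfold Rdiv. rewrite Rabs_mult, Rabs_Rinv by (apply pow_nonzero; lra).
      rewrite (Rabs_right (h ^ _)) by (apply Rle_ge, pow_le; lra).
      assert (Hp : 0 < h ^ (2 * (p/2))%nat) by (apply pow_lt; lra).
      rewrite (Rmult_comm (_ * _) zeta), <- Rmult_assoc, (Rmult_comm zeta).
      apply Rmult_le_compat_r. apply Rlt_le, Rinv_0_lt_compat; auto.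
      eapply Rle_trans. apply Rabs_triang. rewrite Rabs_Ropp.
      destruct (col_bound (Jup X p) (p/2*2+1)%nat (CJ p * zeta) (fun k j _ => IHp k j) (p/2) (p mod 2)%nat j)
        as [B _].
      { pose proof (Nat.mod_upper_bound p 2 ltac:(lia)). lia. }
      pose proof (HX (p/2)%nat (p mod 2)%nat%nat j). nra.
    + rewrite Rabs_R0. apply Rmult_le_pos; auto.
      unfold Rdiv. apply Rmult_le_pos. apply Rplus_le_le_0_compat. lra. apply Rmult_le_pos. apply pow_le.
      assert (0 <= h^2) by apply pow2_ge_0. lra. apply CJ_pos. apply Rlt_le, Rinv_0_lt_compat, pow_lt; lra.
Qed.

End Cols.

Lemma cplus (f g : R -> R) (x : R) : continuous f x -> continuous g x -> continuous (fun t => f t + g t) x.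
Proof. intros; apply (continuous_plus (V:=R_NormedModule) f g); auto. Qed.
Lemma cmult (f g : R -> R) (x : R) : continuous f x -> continuous g x -> continuous (fun t => f t * g t) x.
Proof. intros; apply (continuous_mult (K:=R_AbsRing) f g); auto. Qed.
Lemma cconst (c x : R) : continuous (fun _ : R => c) x.
Proof. apply (continuous_const (U:=R_UniformSpace) (V:=R_UniformSpace)). Qed.
Lemma copp (f : R -> R) (x : R) : continuous f x -> continuous (fun t => - f t) x.
Proof. intros. eapply continuous_ext. 2: apply (cmult (fun _ => -1) f); auto. intros; simpl; ring.
  apply cconst. Qed.
Lemma cminus (f g : R -> R) (x : R) : continuous f x -> continuous g x -> continuous (fun t => f t - g t) x.
Proof. intros. apply cplus; auto. apply copp; auto. Qed.
Lemma cinv (f : R -> R) (x : R) : continuous f x -> f x <> 0 -> continuous (fun t => / f t) x.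
Proof. intros; apply continuous_Rinv_comp; auto. Qed.
Lemma cdiv (f g : R -> R) (x : R) : continuous f x -> continuous g x -> g x <> 0 -> continuous (fun t => f t / g t) x.
Proof. intros. apply cmult; auto. apply cinv; auto. Qed.
Lemma cext_loc (f g : R -> R) (x : R) : continuous f x ->
  (exists e, 0 < e /\ forall t, Rabs (t - x) < e -> f t = g t) -> continuous g x.
Proof. intros H [e [He E]]. apply (continuous_ext_loc (T:=R_UniformSpace) g f x); auto.
  exists (mkposreal e He). intros y Hy. apply E. apply Hy. Qed.
Lemma cpow (f : R -> R) (x : R) n : continuous f x -> continuous (fun t => f t ^ n) x.
Proof. intros H. induction n; simpl. apply cconst. apply cmult; auto. Qed.

Ltac ctac := repeat (first [assumption | apply cconst | apply cplus | apply cminus | apply cmult | apply copp | apply cpow | apply cdiv]).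

Lemma cext (f g : R -> R) (x : R) : continuous f x -> (forall t, f t = g t) -> continuous g x.
Proof. intros H E. apply (continuous_ext f g); auto. Qed.

Lemma abs_le_inv x y : Rabs x <= y -> - y <= x <= y.
Proof. unfold Rabs; destruct Rcase_abs; intros; lra. Qed.

Lemma Derive_eta (f : R -> R) (x l : R) : is_derive f x l -> Derive (fun y : R => f y) x = l.
Proof. intros H. apply is_derive_unique. apply H. Qed.

Definition Phi (l r a1 a2 : R) := (a2 - 2 * a1 + r) * l ^ 2 + (a2 - 4 * a1 + 3 * r) * l + 2 * r.

Lemma root_prop A B C : B <> 0 -> 0 <= B ^ 2 - 4 * A * C ->
  let L := - 2 * C * B / (B ^ 2 + sqrt (B ^ 2 * (B ^ 2 - 4 * A * C))) in
  A * L ^ 2 + B * L + C = 0.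
Proof.
  intros HB HD L. set (s := sqrt (B ^ 2 * (B ^ 2 - 4 * A * C))).
  assert (Hs0 : 0 <= s) by apply sqrt_pos.
  assert (Hs : s * s = B ^ 2 * (B ^ 2 - 4 * A * C)).
  { apply sqrt_sqrt. apply Rmult_le_pos; auto. apply pow2_ge_0. }
  assert (HB2 : 0 < B ^ 2) by (apply pow2_gt_0; auto).
  assert (Hd : 0 < B ^ 2 + s) by lra.
  assert (HL : L * (B ^ 2 + s) = - 2 * C * B). { unfold L. fold s. field. lra. }
  apply Rmult_eq_reg_r with ((B ^ 2 + s) ^ 2); [|apply pow_nonzero; lra].
  replace ((A * L ^ 2 + B * L + C) * (B ^ 2 + s) ^ 2) with
    (A * (L * (B ^ 2 + s)) ^ 2 + B * (L * (B ^ 2 + s)) * (B ^ 2 + s) + C * (B ^ 2 + s) ^ 2) by ring.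
  rewrite HL. replace (A * (- 2 * C * B) ^ 2 + B * (- 2 * C * B) * (B ^ 2 + s) + C * (B ^ 2 + s) ^ 2)
    with (C * (4 * A * C * B ^ 2 - B ^ 4 + s * s)) by ring.
  rewrite Hs. ring.
Qed.

Section Core.
Variables (rho rhod a1 a1d a2 a2d : R -> R) (t0 t1 tb m G eps : R).
Hypothesis Ht : 0 < t1 < t0 /\ t0 < tb.
Hypothesis Hm : 0 < m.
Hypothesis HG : 0 <= G.
Hypothesis Heps : 0 <= eps /\ eps <= m / 16 /\ 8 * eps * G <= m ^ 2 / 2 /\ 2 * eps * (3 * m + 28 * G) <= m ^ 2 / 2.
Hypothesis Hz : forall s, s <= t0 -> rho s = 0 /\ rhod s = 0.
Hypothesis Hrho : forall s, is_derive rho s (rhod s) /\ continuous rhod s.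
Hypothesis Ha : forall s, t1 < s -> is_derive a1 s (a1d s) /\ is_derive a2 s (a2d s) /\
  continuous a1d s /\ continuous a2d s.
Hypothesis Hb : forall s, t1 <= s <= tb ->
  m <= Rabs (a2 s - 4 * a1 s + 3 * rho s) /\ Rabs (a2 s - 2 * a1 s + rho s) <= G /\
  Rabs (rho s) <= eps /\ Rabs (rhod s) <= eps /\ Rabs (a1d s) <= G /\ Rabs (a2d s) <= G.

Definition cA s := a2 s - 2 * a1 s + rho s.
Definition cB s := a2 s - 4 * a1 s + 3 * rho s.
Definition cC s := 2 * rho s.
Definition Lam s := - 2 * cC s * cB s / (cB s ^ 2 + sqrt (cB s ^ 2 * (cB s ^ 2 - 4 * cA s * cC s))).
Definition dLam s := - ((Lam s ^ 2 + 3 * Lam s + 2) * rhod s + (- 2 * Lam s ^ 2 - 4 * Lam s) * a1d s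
   + (Lam s ^ 2 + Lam s) * a2d s) / (2 * cA s * Lam s + cB s).

Lemma Lam_zero s : s <= t0 -> Lam s = 0 /\ dLam s = 0.
Proof.
  intros Hs. destruct (Hz s Hs) as [E1 E2].
  assert (Lam s = 0) by (unfold Lam, cC; rewrite E1; unfold Rdiv; ring).
  split; auto. unfold dLam. rewrite H, E2. unfold Rdiv. ring.
Qed.

Lemma Lam_in s : t1 <= s <= tb ->
  Rabs (Lam s) <= 4 * eps / m /\ Phi (Lam s) (rho s) (a1 s) (a2 s) = 0 /\
  m / 2 <= Rabs (2 * cA s * Lam s + cB s) /\ Rabs (dLam s) <= 1 / 2 /\
  0 < cB s ^ 2 - 4 * cA s * cC s.
Proof.
  intros Hs. destruct (Hb s Hs) as [B1 [B2 [B3 [B4 [B5 B6]]]]].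
  fold (cB s) in B1. fold (cA s) in B2.
  destruct Heps as [E1 [E2 [E3 E4]]].
  assert (HB0 : cB s <> 0) by (intro E; rewrite E, Rabs_R0 in B1; lra).
  assert (HC : Rabs (cC s) <= 2 * eps) by (unfold cC; rewrite Rabs_mult, Rabs_right by lra; lra).
  assert (HAC : Rabs (4 * cA s * cC s) <= 8 * eps * G).
  { rewrite !Rabs_mult, (Rabs_right 4) by lra.
    assert (0 <= Rabs (cA s)) by apply Rabs_pos. assert (0 <= Rabs (cC s)) by apply Rabs_pos. nra. }
  assert (HB2 : m ^ 2 <= cB s ^ 2).
  { rewrite <- (pow2_abs (cB s)). apply pow_incr. lra. }
  assert (HD : 0 < cB s ^ 2 - 4 * cA s * cC s).
  { apply abs_le_inv in HAC. assert (0 < m ^ 2) by (apply pow_lt; lra). lra. }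
  assert (HPhi : Phi (Lam s) (rho s) (a1 s) (a2 s) = 0).
  { pose proof (root_prop (cA s) (cB s) (cC s) HB0 (Rlt_le _ _ HD)) as R. simpl in R.
    exact R. }
  set (sq := sqrt (cB s ^ 2 * (cB s ^ 2 - 4 * cA s * cC s))).
  assert (Hsq : 0 <= sq) by apply sqrt_pos.
  assert (HL : Rabs (Lam s) <= 4 * eps / m).
  { unfold Lam. fold sq. unfold Rdiv. assert (Hm2' : 0 < m ^ 2) by (apply pow_lt; lra). rewrite Rabs_mult, Rabs_Rinv by lra.
    rewrite (Rabs_right (_ + sq)) by lra.
    rewrite !Rabs_mult. replace (Rabs (-2)) with 2 by (unfold Rabs; destruct Rcase_abs; lra).
    assert (0 < m) by lra.
    apply Rle_trans with (2 * Rabs (cC s) * Rabs (cB s) * / cB s ^ 2).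
    { apply Rmult_le_compat_l.
      apply Rmult_le_pos; [apply Rmult_le_pos; [lra|apply Rabs_pos]|apply Rabs_pos].
      apply Rinv_le_contravar; lra. }
    rewrite <- (pow2_abs (cB s)).
    assert (0 < Rabs (cB s)) by lra.
    replace (2 * Rabs (cC s) * Rabs (cB s) * / Rabs (cB s) ^ 2) with (2 * Rabs (cC s) / Rabs (cB s)) by (field; lra).
    unfold Rdiv. apply Rmult_le_compat. apply Rmult_le_pos; [lra|apply Rabs_pos].
    apply Rlt_le, Rinv_0_lt_compat; lra. lra. apply Rinv_le_contravar; lra. }
  assert (HL4 : Rabs (Lam s) <= 1 / 4).
  { eapply Rle_trans; [apply HL|]. apply Rmult_le_reg_r with m; auto. unfold Rdiv.
    rewrite Rmult_assoc, Rinv_l by lra. lra. }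
  assert (HPl : m / 2 <= Rabs (2 * cA s * Lam s + cB s)).
  { assert (Rabs (2 * cA s * Lam s) <= 2 * G * (4 * eps / m)).
    { rewrite !Rabs_mult, (Rabs_right 2) by lra. apply Rmult_le_compat; try lra.
      apply Rmult_le_pos; [lra|apply Rabs_pos]. apply Rabs_pos. }
    assert (2 * G * (4 * eps / m) <= m / 2).
    { replace (2 * G * (4 * eps / m)) with ((8 * eps * G) / m) by (field; lra).
      apply Rmult_le_reg_r with m; [lra|]. unfold Rdiv. rewrite Rmult_assoc, Rinv_l, Rmult_1_r by lra. nra. }
    pose proof (Rabs_triang_inv (cB s) (- (2 * cA s * Lam s))). rewrite Rabs_Ropp in H1.
    replace (cB s - - (2 * cA s * Lam s)) with (2 * cA s * Lam s + cB s) in H1 by ring. lra. }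
  repeat split; auto; try lra.
  unfold dLam. unfold Rdiv. rewrite Rabs_mult, Rabs_Ropp, Rabs_Rinv.
  2: { intro E; rewrite E, Rabs_R0 in HPl; lra. }
  set (L := Lam s) in *. set (Q := Rabs (2 * cA s * L + cB s)) in *.
  assert (HN : Rabs ((L ^ 2 + 3 * L + 2) * rhod s + (-2 * L ^ 2 - 4 * L) * a1d s + (L ^ 2 + L) * a2d s)
     <= 3 * eps + 7 * Rabs L * G).
  { assert (Rabs (L ^ 2 + 3 * L + 2) <= 3).
    { apply Rabs_le. apply abs_le_inv in HL4. nra. }
    assert (Rabs (-2 * L ^ 2 - 4 * L) <= 5 * Rabs L).
    { rewrite <- (Rabs_pos_eq 5) by lra. rewrite <- Rabs_mult.
      apply abs_le_inv in HL4. unfold Rabs; repeat destruct Rcase_abs; nra. }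
    assert (Rabs (L ^ 2 + L) <= 2 * Rabs L).
    { apply abs_le_inv in HL4. unfold Rabs; repeat destruct Rcase_abs; nra. }
    eapply Rle_trans. apply Rabs_triang. eapply Rle_trans. apply Rplus_le_compat_r. apply Rabs_triang.
    rewrite !Rabs_mult.
    assert (0 <= Rabs L) by apply Rabs_pos.
    assert (0 <= Rabs (rhod s)) by apply Rabs_pos.
    assert (0 <= Rabs (a1d s)) by apply Rabs_pos.
    assert (0 <= Rabs (a2d s)) by apply Rabs_pos.
    assert (0 <= Rabs (L ^ 2 + 3 * L + 2)) by apply Rabs_pos.
    nra. }
  assert (HQ : 0 < Q) by lra.
  apply Rle_trans with ((3 * eps + 7 * Rabs L * G) * / (m / 2)).
  { apply Rmult_le_compat. apply Rabs_pos. apply Rlt_le, Rinv_0_lt_compat; lra. auto.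
    apply Rinv_le_contravar; lra. }
  assert (7 * Rabs L * G <= 7 * (4 * eps / m) * G).
  { apply Rmult_le_compat_r; auto. lra. }
  apply Rle_trans with ((3 * eps + 7 * (4 * eps / m) * G) * / (m / 2)).
  { apply Rmult_le_compat_r. apply Rlt_le, Rinv_0_lt_compat; lra. lra. }
  replace ((3 * eps + 7 * (4 * eps / m) * G) * / (m / 2)) with (2 * eps * (3 * m + 28 * G) / m ^ 2)
    by (field; lra).
  apply Rmult_le_reg_r with (m ^ 2). apply pow_lt; lra. unfold Rdiv.
  rewrite Rmult_assoc, Rinv_l by (apply pow_nonzero; lra). lra.
Qed.


Lemma Lam_der s : s < tb -> is_derive Lam s (dLam s) /\ continuous dLam s.
Proof.
  intros Hsb. destruct (Rlt_dec s t0) as [Hs|Hs].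
  - assert (Loc : exists e, 0 < e /\ forall t, Rabs (t - s) < e -> t <= t0).
    { exists (t0 - s). split. lra. intros t Htt. apply Rabs_def2 in Htt; lra. }
    split.
    + rewrite (proj2 (Lam_zero s ltac:(lra))). apply dext_loc with (fun _ => 0). apply dconst.
      destruct Loc as [e [He Hl]]. exists e; split; auto. intros t Htt. rewrite (proj1 (Lam_zero t (Hl t Htt))); auto.
    + apply cext_loc with (fun _ => 0). apply cconst.
      destruct Loc as [e [He Hl]]. exists e; split; auto. intros t Htt. rewrite (proj2 (Lam_zero t (Hl t Htt))); auto.
  - assert (Hs1 : t1 < s) by lra.
    destruct (Ha s Hs1) as [Da1 [Da2 [Ca1 Ca2]]]. destruct (Hrho s) as [Dr Cr].
    destruct (Lam_in s ltac:(lra)) as [_ [_ [HPl [_ HD]]]].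
    assert (HB0 : cB s <> 0).
    { destruct (Hb s ltac:(lra)) as [B1 _]. fold (cB s) in B1. intro E; rewrite E, Rabs_R0 in B1; lra. }
    assert (HB2 : 0 < cB s ^ 2) by (apply pow2_gt_0; auto).
    assert (HPl0 : 2 * cA s * Lam s + cB s <> 0) by (intro E; rewrite E, Rabs_R0 in HPl; lra).
    assert (Ex : ex_derive Lam s).
    { unfold Lam, cA, cB, cC. auto_derive. repeat split; try (eexists; eauto).
      - replace (a2 s + - (4 * a1 s) + 3 * rho s) with (cB s) by (unfold cB; ring).
        replace (a2 s + - (2 * a1 s) + rho s) with (cA s) by (unfold cA; ring).
        replace (2 * rho s) with (cC s) by reflexivity.
        replace (cB s * (cB s * 1) * (cB s * (cB s * 1) + - (4 * cA s * cC s))) with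
          (cB s ^ 2 * (cB s ^ 2 - 4 * cA s * cC s)) by ring.
        apply Rmult_lt_0_compat; auto.
      - replace (a2 s + - (4 * a1 s) + 3 * rho s) with (cB s) by (unfold cB; ring).
        replace (cB s * (cB s * 1)) with (cB s ^ 2) by ring.
        match goal with |- _ + sqrt ?y <> 0 => assert (0 <= sqrt y) by apply sqrt_pos end.
        intro E. lra. }
    destruct Ex as [L HL].
    set (g := fun x => Phi (Lam x) (rho x) (a1 x) (a2 x)).
    assert (Hg1 : is_derive g s ((a2d s - 2 * a1d s + rhod s) * Lam s ^ 2 + (a2 s - 2 * a1 s + rho s) * (2 * Lam s * L)
       + (a2d s - 4 * a1d s + 3 * rhod s) * Lam s + (a2 s - 4 * a1 s + 3 * rho s) * L + 2 * rhod s)).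
    { unfold g, Phi. auto_derive.
      - repeat split; eexists; eauto.
      - rewrite (Derive_eta a1 _ _ Da1), (Derive_eta a2 _ _ Da2),
          (Derive_eta rho _ _ Dr), (Derive_eta Lam _ _ HL). ring. }
    assert (Hg0 : is_derive g s 0).
    { apply dext_loc with (fun _ => 0). apply dconst.
      exists (Rmin (s - t1) (tb - s)). split. apply Rmin_pos; lra.
      intros t Htt.
      assert (Rabs (t - s) < s - t1) by (eapply Rlt_le_trans; [apply Htt|apply Rmin_l]).
      assert (Rabs (t - s) < tb - s) by (eapply Rlt_le_trans; [apply Htt|apply Rmin_r]).
      apply Rabs_def2 in H. apply Rabs_def2 in H0.
      unfold g. symmetry. apply (Lam_in t ltac:(lra)). }
    assert (EL : L = dLam s).
    { pose proof (is_derive_unique _ _ _ Hg1) as E1. pose proof (is_derive_unique _ _ _ Hg0) as E2.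
      rewrite E1 in E2. change (@eq R L (dLam s)).
      apply (Rmult_eq_reg_r (2 * cA s * Lam s + cB s)); auto.
      assert (Hd : dLam s * (2 * cA s * Lam s + cB s) = - ((Lam s ^ 2 + 3 * Lam s + 2) * rhod s +
         (- 2 * Lam s ^ 2 - 4 * Lam s) * a1d s + (Lam s ^ 2 + Lam s) * a2d s)) by (unfold dLam; field; auto).
      rewrite Hd. apply Rminus_diag_uniq. rewrite <- E2. unfold cA, cB. ring. }
    subst L. split; auto.
    assert (CL : continuous Lam s) by (apply (dcont _ _ _ HL)).
    assert (Ca1' : continuous a1 s) by (apply (dcont _ _ _ Da1)).
    assert (Ca2' : continuous a2 s) by (apply (dcont _ _ _ Da2)).
    assert (Cr' : continuous rho s) by (apply (dcont _ _ _ Dr)).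
    unfold dLam. apply cdiv; [ctac|ctac|auto].
Qed.

End Core.

Definition rp (x : R) := (x + Rabs x) / 2.
Lemma rp_neg x : x <= 0 -> rp x = 0.
Proof. intros; unfold rp; rewrite Rabs_left1 by lra; lra. Qed.
Lemma rp_pos x : 0 <= x -> rp x = x.
Proof. intros; unfold rp; rewrite Rabs_right by lra; lra. Qed.
Lemma rp_ge0 x : 0 <= rp x.
Proof. destruct (Rle_dec x 0). rewrite rp_neg; lra. rewrite rp_pos; lra. Qed.
Lemma rp_cont (f : R -> R) x : continuous f x -> continuous (fun t => rp (f t)) x.
Proof. intros H. unfold rp. apply cdiv; [|apply cconst|lra]. apply cplus; auto.
  apply (continuous_Rabs_comp f); auto. Qed.

Section Theta.
Variable T : R.
Hypothesis HT : 0 < T.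
Definition theta t := t - rp (t - T) + rp (t - T) / (1 + rp (t - T)).
Definition thetad t := 1 / (1 + rp (t - T)) ^ 2.

Lemma theta_le t : t <= T -> theta t = t.
Proof. intros; unfold theta; rewrite rp_neg by lra. field. Qed.
Lemma theta_ge t : T <= t -> theta t = T + (t - T) / (1 + (t - T)).
Proof. intros; unfold theta; rewrite rp_pos by lra. field. lra. Qed.
Lemma theta_range t : 0 <= t -> 0 <= theta t < T + 1.
Proof. intros Ht. destruct (Rle_dec t T).
  - rewrite theta_le; lra.
  - rewrite theta_ge by lra. split.
    + assert (0 <= (t - T) / (1 + (t - T))) by (apply Rmult_le_pos; [lra|apply Rlt_le, Rinv_0_lt_compat; lra]). lra.
    + assert ((t - T) / (1 + (t - T)) < 1).
      { apply Rmult_lt_reg_r with (1 + (t - T)); [lra|]. unfold Rdiv. rewrite Rmult_assoc, Rinv_l by lra. lra. }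
      lra.
Qed.

Lemma thetad_bound t : 0 <= thetad t <= 1.
Proof. unfold thetad. pose proof (rp_ge0 (t - T)).
  assert (1 <= (1 + rp (t - T)) ^ 2) by (apply pow_R1_Rle; lra).
  split. apply Rmult_le_pos; [lra|]. apply Rlt_le, Rinv_0_lt_compat; lra.
  unfold Rdiv. rewrite Rmult_1_l. rewrite <- Rinv_1. apply Rinv_le_contravar; lra. Qed.

Lemma thetad_cont t : continuous thetad t.
Proof. unfold thetad. apply cdiv. apply cconst. apply cpow. apply cplus. apply cconst. apply rp_cont.
  apply cminus. apply (continuous_id (U:=R_UniformSpace)). apply cconst.
  apply pow_nonzero. pose proof (rp_ge0 (t - T)). lra. Qed.

Lemma theta_der t : is_derive theta t (thetad t).
Proof.
  set (f2 := fun x => T + (x - T) / (1 + (x - T))).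
  assert (D2 : forall x, T - 1 / 2 < x -> is_derive f2 x (1 / (1 + (x - T)) ^ 2)).
  { intros x Hx. unfold f2. auto_derive. lra. field. lra. }
  destruct (Rtotal_order t T) as [H|[H|H]].
  - unfold thetad. rewrite rp_neg by lra. apply dext_loc with (fun x => x).
    eapply dext. apply did. intros; reflexivity. field.
    exists (T - t). split; [lra|]. intros x Hx. apply Rabs_def2 in Hx. rewrite theta_le; lra.
  - subst t. apply djunction with (fun x => x) f2.
    + unfold thetad. rewrite rp_neg by lra. eapply dext. apply did. intros; reflexivity. field.
    + unfold thetad. rewrite rp_neg by lra. eapply dext. apply D2. lra. intros; reflexivity.
      replace (T - T) with 0 by ring. reflexivity.
    + intros; apply theta_le; auto.
    + intros; apply theta_ge; auto.
  - unfold thetad. rewrite rp_pos by lra. apply dext_loc with f2. apply D2. lra.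
    exists (t - T). split; [lra|]. intros x Hx. apply Rabs_def2 in Hx. rewrite theta_ge; [reflexivity|lra].
Qed.
End Theta.

Lemma interiorb_spec M N i j : interiorb M N i j = true <-> inner_node M N i j.
Proof.
  unfold interiorb, inner_node. rewrite !Bool.andb_true_iff, !Nat.leb_le. tauto.
Qed.
Lemma ext_in M N u i j : inner_node M N i j -> ext M N u i j = u i j.
Proof. intros H. unfold ext. apply interiorb_spec in H. rewrite H. auto. Qed.
Lemma ext_out M N u i j : ~ inner_node M N i j -> ext M N u i j = 0.
Proof. intros H. unfold ext. destruct (interiorb M N i j) eqn:E; auto.
  apply interiorb_spec in E. tauto. Qed.
Lemma ext_add M N (u v : grid) i j : ext M N (fun a b => u a b + v a b) i j = ext M N u i j + ext M N v i j.
Proof. unfold ext. destruct (interiorb M N i j); ring. Qed.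
Lemma jin_spec N j : jin N j = true <-> (1 <= j <= N - 1)%nat.
Proof. unfold jin. rewrite Bool.andb_true_iff, !Nat.leb_le. tauto. Qed.

Lemma row1_alg (h L rho U1 U2 U1p U1m E1 E2 E1p E1m c2 au Fv : R) :
  0 < h -> Rabs L <= 1 / 4 ->
  rho = h ^ 2 * c2 + 4 * E1 - E2 - E1p - E1m ->
  Phi L rho (U1 + E1) (U2 + E2) = 0 ->
  au + / (h ^ 2) * (2 * (1 + 1 / (1 + 0)) * U1 - 2 / (2 + 0) * U2 - U1p - U1m) = Fv ->
  au + c2 + / (h ^ 2) * (2 * (1 + 1 / (1 + L)) * (U1 + E1) - 2 / (2 + L) * (U2 + E2)
     - (U1p + E1p) - (U1m + E1m)) = Fv.
Proof.
  intros Hh HL Hr HP HF. apply abs_le_inv in HL.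
  assert (h ^ 2 <> 0) by (apply pow_nonzero; lra).
  replace c2 with ((rho - 4 * E1 + E2 + E1p + E1m) / h ^ 2) by (rewrite Hr; field; try split; auto; lra).
  rewrite <- HF. apply Rminus_diag_uniq.
  replace (au + (rho - 4 * E1 + E2 + E1p + E1m) / h ^ 2 +
   / h ^ 2 * (2 * (1 + 1 / (1 + L)) * (U1 + E1) - 2 / (2 + L) * (U2 + E2) - (U1p + E1p) - (U1m + E1m)) -
   (au + / h ^ 2 * (2 * (1 + 1 / (1 + 0)) * U1 - 2 / (2 + 0) * U2 - U1p - U1m)))
  with (Phi L rho (U1 + E1) (U2 + E2) / (h ^ 2 * (1 + L) * (2 + L))).
  rewrite HP. unfold Rdiv; ring.
  unfold Phi. field. repeat split; lra.
Qed.

Lemma rowi_alg (h c2 U Ua Ub Uc Ud E Ea Eb Ec Ed au Fv : R) :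
  0 < h -> Eb = h ^ 2 * c2 + 4 * E - Ea - Ec - Ed ->
  au + / (h ^ 2) * (4 * U - Ua - Ub - Uc - Ud) = Fv ->
  au + c2 + / (h ^ 2) * (4 * (U + E) - (Ua + Ea) - (Ub + Eb) - (Uc + Ec) - (Ud + Ed)) = Fv.
Proof.
  intros Hh Hb HF. rewrite <- HF, Hb. field. lra.
Qed.

Lemma min_fam (f : nat -> R -> R) (P : nat -> Prop) (D : R -> Prop) n :
  (forall k, (k < n)%nat -> P k -> exists m, 0 < m /\ forall t, D t -> m <= f k t) ->
  exists m, 0 < m /\ forall k, (k < n)%nat -> P k -> forall t, D t -> m <= f k t.
Proof.
  induction n; intros H.
  - exists 1. split; [lra|]. intros; lia.
  - destruct IHn as [m1 [Hm1 H1]]. intros; apply H; auto; lia.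
    destruct (classic (P n)) as [Pn|Pn].
    + destruct (H n ltac:(lia) Pn) as [m2 [Hm2 H2]].
      exists (Rmin m1 m2). split. apply Rmin_pos; auto.
      intros k Hk Pk t Ht. destruct (Nat.eq_dec k n). subst. eapply Rle_trans; [apply Rmin_r|auto].
      eapply Rle_trans; [apply Rmin_l|]. apply H1; auto; lia.
    + exists m1. split; auto. intros k Hk Pk t Ht. destruct (Nat.eq_dec k n). subst; tauto.
      apply H1; auto; lia.
Qed.

Lemma cabs (f : R -> R) x : continuous f x -> continuous (fun t => Rabs (f t)) x.
Proof. intros; apply (continuous_Rabs_comp f); auto. Qed.

Section Main.
Variables (M N : nat) (h T : R) (F : R -> grid) (u0 u1 : grid) (u du : R -> grid).
Hypothesis HM : (2 <= M)%nat.
Hypothesis HN : (2 <= N)%nat.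
Hypothesis Hh : 0 < h.
Hypothesis HT : 0 < T.
Hypothesis Hu : solves_on (fun t => 0 <= t) M N h F (fun _ _ => 0) u0 u1 u du.
Hypothesis Hnd : forall t, 0 < t -> forall j, (1 <= j <= N - 1)%nat ->
       / 2 * ext M N (u t) 2%nat j - 2 * ext M N (u t) 1%nat j <> 0.

Definition t0 := T / 2.
Definition t1 := T / 4.
Definition tb := T + 1.
Definition Dm := (2 * M + 2)%nat.
Definition PP := (2 * M - 2)%nat.

Definition Xt (Z : grid * grid) (n o j : nat) : R :=
  if (Nat.leb n (M - 2) && jin N j)%bool then
    (if Nat.eqb o 0 then fst Z (M - 1 - n)%nat j - u T (M - 1 - n)%nat j
     else snd Z (M - 1 - n)%nat j - du T (M - 1 - n)%nat j) else 0.
Definition YY Z := Yb t0 T Dm (Jup h N (Xt Z) PP) PP.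
Definition cl Z s n k j := col h N (YY Z s) n k j.
Definition clp Z s n k j := colp h N (YY Z s) n k j.
Definition ww Z t : grid := fun i j => u t i j + cl Z t (M - 1 - i) 0 j.
Definition dww Z t : grid := fun i j => du t i j + cl Z t (M - 1 - i) 1%nat j.

Lemma t0T : t0 < T.
Proof. unfold t0; lra. Qed.

Lemma u_der t i j : 0 <= t -> inner_node M N i j ->
  is_derive (fun s => u s i j) t (du t i j) /\ exists a, is_derive (fun s => du s i j) t a /\
   a + Aop h (fun _ => 0) (ext M N (u t)) i j = F t i j.
Proof.
  intros Ht Hin. destruct (Hu i j Hin) as [_ [_ H]]. destruct (H t Ht) as [a [A1 [A2 A3]]].
  split; auto. exists a; auto.
Qed.

Lemma ext_u_der t i j : 0 <= t ->
  is_derive (fun s => ext M N (u s) i j) t (ext M N (du t) i j) /\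
  continuous (fun s => ext M N (du s) i j) t.
Proof.
  intros Ht. destruct (classic (inner_node M N i j)) as [Hin|Hout].
  - destruct (u_der t i j Ht Hin) as [D1 [a [D2 _]]]. split.
    + rewrite ext_in by auto. eapply dext. apply D1. intros s. rewrite ext_in; auto. reflexivity.
    + apply cext with (fun s => du s i j). apply (dcont _ _ _ D2). intros s; rewrite ext_in; auto.
  - split.
    + rewrite ext_out by auto. eapply dext. apply (dconst 0). intros s; rewrite ext_out; auto. reflexivity.
    + apply cext with (fun _ => 0). apply cconst. intros s; rewrite ext_out; auto.
Qed.

Lemma YY_der Z k j t : (k < Dm)%nat -> is_derive (fun s => YY Z s k j) t (YY Z t (S k) j).
Proof. intros; apply Yb_der; auto. Qed.

Lemma cl_der Z n k j t : (k + 2 * n < Dm)%nat ->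
  is_derive (fun s => cl Z s n k j) t (cl Z t n (S k) j) /\
  is_derive (fun s => clp Z s n k j) t (clp Z t n (S k) j).
Proof. intros H. apply (col_der h N (YY Z) Dm t); auto. intros; apply YY_der; auto. Qed.

Lemma cl_zero Z s n k j : s <= t0 -> cl Z s n k j = 0 /\ clp Z s n k j = 0.
Proof.
  intros Hs. destruct (col_bound h N (YY Z s) (k + 2 * n) 0) with n k j as [B1 B2].
  - intros k' j' _. unfold YY. rewrite Yb_zero by auto. rewrite Rabs_R0; lra.
  - lia.
  - rewrite Rmult_0_r in B1, B2. unfold cl, clp. split; apply Rabs_eq_0; apply Rle_antisym; auto; apply Rabs_pos.
Qed.

Lemma Xt_bound Z zeta : 0 <= zeta ->
  (forall i j, inner_node M N i j -> Rabs (fst Z i j - u T i j) <= zeta /\ Rabs (snd Z i j - du T i j) <= zeta) ->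
  forall n o j, Rabs (Xt Z n o j) <= zeta.
Proof.
  intros Hz HZ n o j. unfold Xt.
  destruct (Nat.leb n (M - 2)) eqn:E1; [|simpl; rewrite Rabs_R0; auto].
  destruct (jin N j) eqn:E2; [|simpl; rewrite Rabs_R0; auto]. simpl.
  apply Nat.leb_le in E1. apply jin_spec in E2.
  assert (Hin : inner_node M N (M - 1 - n) j) by (unfold inner_node; lia).
  destruct (HZ _ _ Hin). destruct (Nat.eqb o 0); auto.
Qed.

Lemma cl_bound : exists Ce, 0 <= Ce /\ forall Z zeta, 0 <= zeta ->
  (forall i j, inner_node M N i j -> Rabs (fst Z i j - u T i j) <= zeta /\ Rabs (snd Z i j - du T i j) <= zeta) ->
  forall s, t1 <= s <= tb -> forall n k j, (n <= M - 1)%nat -> (k + 2 * n <= Dm - 1)%nat ->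
  Rabs (cl Z s n k j) <= Ce * zeta /\ Rabs (clp Z s n k j) <= Ce * zeta.
Proof.
  destruct (Yb_bound t0 T t1 tb Dm t0T ltac:(unfold t1, tb; lra) PP ltac:(unfold PP, Dm; lia)) as [C [HC HYb]].
  assert (HCJ := CJ_pos h Hh PP).
  assert (Hq : 1 <= h ^ 2 + 7) by (pose proof (pow2_ge_0 h); lra).
  exists ((h ^ 2 + 7) ^ (M - 1) * (C * CJ h PP)). split.
  { apply Rmult_le_pos. apply pow_le; lra. apply Rmult_le_pos; auto. }
  intros Z zeta Hz HZ s Hs n k j Hn Hk.
  assert (HJ := Jup_bound h N Hh (Xt Z) zeta PP Hz (Xt_bound Z zeta Hz HZ)).
  assert (HY : forall k' j', (k' <= Dm - 1)%nat -> Rabs (YY Z s k' j') <= C * (CJ h PP * zeta)).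
  { intros k' j' Hk'. unfold YY. apply HYb; auto. unfold Dm in *; lia. }
  destruct (col_bound h N (YY Z s) (Dm - 1) _ HY n k j Hk) as [B1 B2].
  assert (Hp : (h ^ 2 + 7) ^ n <= (h ^ 2 + 7) ^ (M - 1)) by (apply Rle_pow; auto).
  assert (0 <= C * (CJ h PP * zeta)) by (apply Rmult_le_pos; auto; apply Rmult_le_pos; auto).
  unfold cl, clp. split.
  - eapply Rle_trans; [apply B1|]. replace ((h ^ 2 + 7) ^ (M - 1) * (C * CJ h PP) * zeta) with
      ((h ^ 2 + 7) ^ (M - 1) * (C * (CJ h PP * zeta))) by ring. apply Rmult_le_compat_r; auto.
  - eapply Rle_trans; [apply B2|]. replace ((h ^ 2 + 7) ^ (M - 1) * (C * CJ h PP) * zeta) with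
      ((h ^ 2 + 7) ^ (M - 1) * (C * (CJ h PP * zeta))) by ring. apply Rmult_le_compat_r; auto.
Qed.

Lemma cl_terminal Z i j : inner_node M N i j ->
  cl Z T (M - 1 - i) 0 j = fst Z i j - u T i j /\ cl Z T (M - 1 - i) 1%nat j = snd Z i j - du T i j.
Proof.
  intros Hin. unfold inner_node in Hin.
  assert (HD : forall n o, (o <= 1)%nat -> (n <= M - 2)%nat -> cl Z T n o j = Xt Z n o j).
  { intros n o Ho Hn. unfold cl.
    destruct (col_dep h N (YY Z T) (Jup h N (Xt Z) PP) (2 * M - 3)) with n o j as [E _].
    - intros k j' Hk. unfold YY. apply Yb_jet. apply t0T. unfold PP; lia.
    - lia.
    - rewrite E. apply Jup_ok; auto. unfold PP; lia. }
  assert (Ej : jin N j = true) by (apply jin_spec; lia).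
  assert (El : Nat.leb (M - 1 - i) (M - 2) = true) by (apply Nat.leb_le; lia).
  replace (M - 1 - (M - 1 - i))%nat with i by lia.
  rewrite !HD by lia. unfold Xt. rewrite El, Ej. simpl.
  replace (M - 1 - (M - 1 - i))%nat with i by lia. auto.
Qed.

Lemma ext_cl_a Z s k i j : inner_node M N i j ->
  ext M N (fun a b => cl Z s (M - 1 - a) k b) i j = cl Z s (M - 1 - i) k j.
Proof. intros; rewrite ext_in by auto; reflexivity. Qed.

Lemma ext_cl_b Z s k i j : inner_node M N i j ->
  ext M N (fun a b => cl Z s (M - 1 - a) k b) (i + 1)%nat j = clp Z s (M - 1 - i) k j.
Proof.
  intros Hin. unfold inner_node in Hin. destruct (Nat.eq_dec i (M - 1)).
  - rewrite ext_out by (unfold inner_node; lia). replace (M - 1 - i)%nat with 0%nat by lia. reflexivity.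
  - rewrite ext_in by (unfold inner_node; lia). unfold clp.
    replace (M - 1 - i)%nat with (S (M - 1 - (i + 1))) by lia. rewrite colp_S. reflexivity.
Qed.

Lemma ext_cl_c Z s k i j : inner_node M N i j -> (2 <= i)%nat ->
  ext M N (fun a b => cl Z s (M - 1 - a) k b) (i - 1)%nat j = cl Z s (S (M - 1 - i)) k j.
Proof.
  intros Hin Hi. unfold inner_node in Hin. rewrite ext_in by (unfold inner_node; lia).
  f_equal. lia.
Qed.

Lemma ext_cl_d Z s k i j j' : inner_node M N i j ->
  ext M N (fun a b => cl Z s (M - 1 - a) k b) i j' = sh N (col h N (YY Z s) (M - 1 - i)) k j'.
Proof.
  intros Hin. unfold inner_node in Hin. unfold sh. destruct (jin N j') eqn:E.
  - apply jin_spec in E. rewrite ext_in by (unfold inner_node; lia). reflexivity.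
  - rewrite ext_out; auto. intros [_ H]. apply (proj2 (jin_spec N j')) in H. congruence.
Qed.

Lemma ext_ww Z t i j : ext M N (ww Z t) i j = ext M N (u t) i j + ext M N (fun a b => cl Z t (M - 1 - a) 0 b) i j.
Proof. unfold ww. apply ext_add. Qed.
Lemma ext_dww Z t i j : ext M N (dww Z t) i j = ext M N (du t) i j + ext M N (fun a b => cl Z t (M - 1 - a) 1 b) i j.
Proof. unfold dww. apply ext_add. Qed.

Lemma ext_ww_der Z t i j : 0 <= t ->
  is_derive (fun s => ext M N (ww Z s) i j) t (ext M N (dww Z t) i j) /\
  continuous (fun s => ext M N (dww Z s) i j) t.
Proof.
  intros Ht. destruct (ext_u_der t i j Ht) as [D1 C1].
  destruct (classic (inner_node M N i j)) as [Hin|Hout].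
  - assert (Hn : (M - 1 - i <= M - 2)%nat) by (unfold inner_node in Hin; lia).
    destruct (cl_der Z (M - 1 - i) 0 j t ltac:(unfold Dm; lia)) as [D2 _].
    destruct (cl_der Z (M - 1 - i) 1%nat j t ltac:(unfold Dm; lia)) as [D3 _].
    split.
    + rewrite ext_dww, ext_cl_a by auto. eapply dext. apply dplus. apply D1. apply D2.
      intros s. rewrite ext_ww, ext_cl_a; auto. reflexivity.
    + apply cext with (fun s => ext M N (du s) i j + cl Z s (M - 1 - i) 1%nat j).
      apply cplus; auto. apply (dcont _ _ _ D3). intros s. rewrite ext_dww, ext_cl_a; auto.
  - split.
    + rewrite ext_out by auto. eapply dext. apply (dconst 0). intros s; rewrite ext_out; auto. reflexivity.
    + apply cext with (fun _ => 0). apply cconst. intros s; rewrite ext_out; auto.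
Qed.


Lemma u_bounds : exists Bu, 0 <= Bu /\ forall s, t1 <= s <= tb -> forall j,
  Rabs (ext M N (u s) 1%nat j) <= Bu /\ Rabs (ext M N (u s) 2%nat j) <= Bu /\
  Rabs (ext M N (du s) 1%nat j) <= Bu /\ Rabs (ext M N (du s) 2%nat j) <= Bu.
Proof.
  set (f := fun j s => Rabs (ext M N (u s) 1%nat j) + Rabs (ext M N (u s) 2%nat j) +
     Rabs (ext M N (du s) 1%nat j) + Rabs (ext M N (du s) 2%nat j)).
  destruct (bounded_fam f (fun s => t1 <= s <= tb) N) as [B [HB HBf]].
  { intros j Hj. apply bounded_cont. unfold t1, tb; lra.
    intros c Hc. apply continuity_pt_filterlim.
    assert (Hc0 : 0 <= c) by (unfold t1 in Hc; lra).
    destruct (ext_u_der c 1%nat j Hc0) as [D1 C1]. destruct (ext_u_der c 2%nat j Hc0) as [D2 C2].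
    change (continuous (f j) c). unfold f. apply cplus; [apply cplus; [apply cplus|]|]; apply cabs; auto.
    apply (dcont _ _ _ D1). apply (dcont _ _ _ D2). }
  exists B. split; auto. intros s Hs j.
  destruct (Compare_dec.le_lt_dec N j) as [Hj|Hj].
  - rewrite !ext_out by (unfold inner_node; lia). rewrite Rabs_R0. repeat split; auto.
  - specialize (HBf j Hj s Hs). unfold f in HBf; cbv beta in HBf.
    pose proof (Rabs_pos (ext M N (u s) 1%nat j)). pose proof (Rabs_pos (ext M N (u s) 2%nat j)).
    pose proof (Rabs_pos (ext M N (du s) 1%nat j)). pose proof (Rabs_pos (ext M N (du s) 2%nat j)).
    rewrite Rabs_right in HBf by lra. repeat split; lra.
Qed.

Lemma nd_bound : exists m, 0 < m /\ forall j, (1 <= j <= N - 1)%nat -> forall s, t1 <= s <= tb ->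
  m <= Rabs (/ 2 * ext M N (u s) 2%nat j - 2 * ext M N (u s) 1%nat j).
Proof.
  destruct (min_fam (fun j s => Rabs (/ 2 * ext M N (u s) 2%nat j - 2 * ext M N (u s) 1%nat j))
     (fun j => (1 <= j <= N - 1)%nat) (fun s => t1 <= s <= tb) N) as [m [Hm H]].
  - intros j Hj Pj.
    destruct (continuity_ab_min (fun s => Rabs (/ 2 * ext M N (u s) 2%nat j - 2 * ext M N (u s) 1%nat j)) t1 tb)
      as [mx [Hmx Hr]].
    + unfold t1, tb; lra.
    + intros c Hc. apply continuity_pt_filterlim.
      assert (Hc0 : 0 <= c) by (unfold t1 in Hc; lra).
      destruct (ext_u_der c 1%nat j Hc0) as [D1 _]. destruct (ext_u_der c 2%nat j Hc0) as [D2 _].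
      change (continuous (fun s => Rabs (/ 2 * ext M N (u s) 2%nat j - 2 * ext M N (u s) 1%nat j)) c).
      apply cabs. apply cminus; apply cmult; try apply cconst.
      apply (dcont _ _ _ D2). apply (dcont _ _ _ D1).
    + exists (Rabs (/ 2 * ext M N (u mx) 2%nat j - 2 * ext M N (u mx) 1%nat j)). split.
      * apply Rabs_pos_lt. apply Hnd; auto. unfold t1 in Hr; lra.
      * intros t Ht; apply Hmx; auto.
  - exists m. split; auto. intros j Hj s Hs. apply (H j); auto. lia.
Qed.

Lemma eps_conds m G : 0 < m -> 0 <= G ->
  let e0 := Rmin 1 (Rmin (m / 16) (Rmin (m ^ 2 / (16 * G + 1)) (m ^ 2 / (4 * (3 * m + 28 * G) + 1)))) in
  0 < e0 /\ forall eps, 0 <= eps <= e0 ->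
    eps <= 1 /\ eps <= m / 16 /\ 8 * eps * G <= m ^ 2 / 2 /\ 2 * eps * (3 * m + 28 * G) <= m ^ 2 / 2.
Proof.
  intros Hm HG e0. assert (Hm2 : 0 < m ^ 2) by (apply pow_lt; lra).
  split.
  - unfold e0. repeat apply Rmin_pos; try lra; apply Rdiv_lt_0_compat; lra.
  - intros eps [He0 He].
    assert (E1 : eps <= 1) by (eapply Rle_trans; [apply He|apply Rmin_l]).
    assert (E2 : eps <= m / 16) by (eapply Rle_trans; [apply He|]; unfold e0;
      eapply Rle_trans; [apply Rmin_r|apply Rmin_l]).
    assert (E3 : eps <= m ^ 2 / (16 * G + 1)) by (eapply Rle_trans; [apply He|]; unfold e0;
      eapply Rle_trans; [apply Rmin_r|]; eapply Rle_trans; [apply Rmin_r|apply Rmin_l]).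
    assert (E4 : eps <= m ^ 2 / (4 * (3 * m + 28 * G) + 1)) by (eapply Rle_trans; [apply He|]; unfold e0;
      eapply Rle_trans; [apply Rmin_r|]; eapply Rle_trans; [apply Rmin_r|apply Rmin_r]).
    repeat split; auto.
    + apply Rmult_le_reg_r with (16 * G + 1); [lra|].
      apply Rmult_le_compat_r with (r := 16 * G + 1) in E3; [|lra].
      unfold Rdiv in E3. rewrite Rmult_assoc, Rinv_l, Rmult_1_r in E3 by lra. nra.
    + apply Rmult_le_compat_r with (r := 4 * (3 * m + 28 * G) + 1) in E4; [|lra].
      unfold Rdiv in E4. rewrite Rmult_assoc, Rinv_l, Rmult_1_r in E4 by lra. nra.
Qed.

Lemma main_concl : exists (V0 : (R -> nat -> R) -> Prop) (VZ : grid * grid -> Prop),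
      nbhd0 N T V0 /\ nbhdZ M N (u T, du T) VZ /\
      forall Z, VZ Z ->
        exists (lam : R -> nat -> R) (w dw : R -> grid),
          admissible N lam /\
          V0 (fun t j => h * lam t j) /\
          solves_on (fun t => 0 <= t <= T) M N h F lam u0 u1 w dw /\
          forall i j, inner_node M N i j -> w T i j = fst Z i j /\ dw T i j = snd Z i j.
Proof.
  destruct cl_bound as [Ce [HCe Hcl]].
  destruct u_bounds as [Bu [HBu HB]].
  destruct nd_bound as [m [Hm Hmb]].
  set (G := 3 * Bu + 4).
  assert (HG : 0 <= G) by (unfold G; lra).
  destruct (eps_conds m G Hm HG) as [He0 Heps]. set (e0 := Rmin 1 _) in *.
  set (zeta := e0 / (Ce + 1)).
  assert (Hz : 0 < zeta) by (unfold zeta; apply Rdiv_lt_0_compat; lra).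
  set (eps := Ce * zeta).
  assert (Heps0 : 0 <= eps <= e0).
  { split. unfold eps; apply Rmult_le_pos; lra. unfold eps, zeta.
    replace (Ce * (e0 / (Ce + 1))) with (e0 * (Ce / (Ce + 1))) by (field; lra).
    rewrite <- (Rmult_1_r e0) at 2. apply Rmult_le_compat_l; [lra|].
    apply Rmult_le_reg_r with (Ce + 1); [lra|]. unfold Rdiv. rewrite Rmult_assoc, Rinv_l by lra. lra. }
  destruct (Heps eps Heps0) as [Ee1 [Ee2 [Ee3 Ee4]]].
  exists (fun _ => True).
  exists (fun Z => forall i j, inner_node M N i j ->
    Rabs (fst Z i j - fst (u T, du T) i j) < zeta /\ Rabs (snd Z i j - snd (u T, du T) i j) < zeta).
  split; [exists 1; split; [lra|auto]|].
  split; [exists zeta; split; auto|].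
  intros Z HZ.
  assert (HZ' : forall i j, inner_node M N i j ->
    Rabs (fst Z i j - u T i j) <= zeta /\ Rabs (snd Z i j - du T i j) <= zeta).
  { intros i j Hin. destruct (HZ i j Hin) as [A B]. cbn [fst snd] in A, B. split; apply Rlt_le; assumption. }
  assert (Hclz := Hcl Z zeta (Rlt_le _ _ Hz) HZ').
  set (rho := fun j s => cl Z s (M - 1) 0 j).
  set (rhod := fun j s => cl Z s (M - 1) 1 j).
  set (a1 := fun j s => ext M N (ww Z s) 1%nat j).
  set (a1d := fun j s => ext M N (dww Z s) 1%nat j).
  set (a2 := fun j s => ext M N (ww Z s) 2%nat j).
  set (a2d := fun j s => ext M N (dww Z s) 2%nat j).
  assert (Ht : 0 < t1 < t0 /\ t0 < tb) by (unfold t1, t0, tb; lra).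
  assert (Hepsc : 0 <= eps /\ eps <= m / 16 /\ 8 * eps * G <= m ^ 2 / 2 /\ 2 * eps * (3 * m + 28 * G) <= m ^ 2 / 2)
    by (repeat split; lra).
  assert (HzJ : forall j s, s <= t0 -> rho j s = 0 /\ rhod j s = 0).
  { intros j s Hs. unfold rho, rhod. split; apply cl_zero; auto. }
  assert (HrhoJ : forall j s, is_derive (rho j) s (rhod j s) /\ continuous (rhod j) s).
  { intros j s. unfold rho, rhod. split. apply (proj1 (cl_der Z (M - 1) 0 j s ltac:(unfold Dm; lia))).
    apply (dcont _ _ (cl Z s (M - 1) 2 j)). apply (proj1 (cl_der Z (M - 1) 1 j s ltac:(unfold Dm; lia))). }
  assert (HaJ : forall j s, t1 < s -> is_derive (a1 j) s (a1d j s) /\ is_derive (a2 j) s (a2d j s) /\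
      continuous (a1d j) s /\ continuous (a2d j) s).
  { intros j s Hs. assert (0 <= s) by (unfold t1 in Hs; lra).
    destruct (ext_ww_der Z s 1%nat j H) as [D1 C1]. destruct (ext_ww_der Z s 2%nat j H) as [D2 C2].
    unfold a1, a1d, a2, a2d. split; [exact D1|split; [exact D2|split; [exact C1|exact C2]]]. }
  assert (Hin1 : forall j, (1 <= j <= N - 1)%nat -> inner_node M N 1 j) by (intros; unfold inner_node; lia).
  assert (Ea1 : forall j s, (1 <= j <= N - 1)%nat -> a1 j s = ext M N (u s) 1%nat j + cl Z s (M - 2) 0 j).
  { intros j s Hj. unfold a1. rewrite ext_ww, ext_cl_a by auto. replace (M - 1 - 1)%nat with (M - 2)%nat by lia. auto. }
  assert (Ea1d : forall j s, (1 <= j <= N - 1)%nat -> a1d j s = ext M N (du s) 1%nat j + cl Z s (M - 2) 1 j).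
  { intros j s Hj. unfold a1d. rewrite ext_dww, ext_cl_a by auto. replace (M - 1 - 1)%nat with (M - 2)%nat by lia. auto. }
  assert (Ea2 : forall j s, (1 <= j <= N - 1)%nat -> a2 j s = ext M N (u s) 2%nat j + clp Z s (M - 2) 0 j).
  { intros j s Hj. unfold a2. rewrite ext_ww. pose proof (ext_cl_b Z s 0 1 j (Hin1 j Hj)) as E.
    change (1 + 1)%nat with 2%nat in E. rewrite E. replace (M - 1 - 1)%nat with (M - 2)%nat by lia. auto. }
  assert (Ea2d : forall j s, (1 <= j <= N - 1)%nat -> a2d j s = ext M N (du s) 2%nat j + clp Z s (M - 2) 1 j).
  { intros j s Hj. unfold a2d. rewrite ext_dww. pose proof (ext_cl_b Z s 1 1 j (Hin1 j Hj)) as E.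
    change (1 + 1)%nat with 2%nat in E. rewrite E. replace (M - 1 - 1)%nat with (M - 2)%nat by lia. auto. }
  assert (HbJ : forall j, (1 <= j <= N - 1)%nat -> forall s, t1 <= s <= tb ->
     m <= Rabs (a2 j s - 4 * a1 j s + 3 * rho j s) /\ Rabs (a2 j s - 2 * a1 j s + rho j s) <= G /\
     Rabs (rho j s) <= eps /\ Rabs (rhod j s) <= eps /\ Rabs (a1d j s) <= G /\ Rabs (a2d j s) <= G).
  { intros j Hj s Hs. rewrite Ea1, Ea2, Ea1d, Ea2d by auto. unfold rho, rhod.
    destruct (Hclz s Hs (M - 2)%nat 0%nat j ltac:(lia) ltac:(unfold Dm; lia)) as [B1 B2].
    destruct (Hclz s Hs (M - 2)%nat 1%nat j ltac:(lia) ltac:(unfold Dm; lia)) as [B3 B4].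
    destruct (Hclz s Hs (M - 1)%nat 0%nat j ltac:(lia) ltac:(unfold Dm; lia)) as [B5 _].
    destruct (Hclz s Hs (M - 1)%nat 1%nat j ltac:(lia) ltac:(unfold Dm; lia)) as [B6 _].
    fold eps in B1, B2, B3, B4, B5, B6.
    destruct (HB s Hs j) as [U1 [U2 [U3 U4]]].
    pose proof (Hmb j Hj s Hs) as Mb.
    apply abs_le_inv in B1, B2, B3, B4, B5, B6, U1, U2, U3, U4.
    set (x1 := ext M N (u s) 1%nat j) in *. set (x2 := ext M N (u s) 2%nat j) in *.
    set (c1 := cl Z s (M - 2) 0 j) in *. set (c2 := clp Z s (M - 2) 0 j) in *.
    set (r := cl Z s (M - 1) 0 j) in *.
    repeat split.
    - replace (x2 + c2 - 4 * (x1 + c1) + 3 * r) with (2 * (/ 2 * x2 - 2 * x1) + (c2 - 4 * c1 + 3 * r)) by field.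
      pose proof (Rabs_triang_inv (2 * (/ 2 * x2 - 2 * x1)) (- (c2 - 4 * c1 + 3 * r))) as T1.
      rewrite Rabs_Ropp in T1. replace (2 * (/ 2 * x2 - 2 * x1) - - (c2 - 4 * c1 + 3 * r)) with
        (2 * (/ 2 * x2 - 2 * x1) + (c2 - 4 * c1 + 3 * r)) in T1 by ring.
      rewrite Rabs_mult, (Rabs_right 2) in T1 by lra.
      assert (Rabs (c2 - 4 * c1 + 3 * r) <= 8 * eps) by (apply Rabs_le; lra). lra.
    - apply Rabs_le. unfold G. lra.
    - apply Rabs_le; lra.
    - apply Rabs_le; lra.
    - apply Rabs_le. unfold G. lra.
    - apply Rabs_le. unfold G. lra. }
  set (lam := fun t j => Lam (rho j) (a1 j) (a2 j) (theta T t)).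
  assert (LJ : forall j, (1 <= j <= N - 1)%nat -> forall s, s < tb ->
     Rabs (Lam (rho j) (a1 j) (a2 j) s) <= 1 / 4 /\
     Rabs (dLam (rho j) (rhod j) (a1 j) (a1d j) (a2 j) (a2d j) s) <= 1 / 2 /\
     Phi (Lam (rho j) (a1 j) (a2 j) s) (rho j s) (a1 j s) (a2 j s) = 0 /\
     is_derive (Lam (rho j) (a1 j) (a2 j)) s (dLam (rho j) (rhod j) (a1 j) (a1d j) (a2 j) (a2d j) s) /\
     continuous (dLam (rho j) (rhod j) (a1 j) (a1d j) (a2 j) (a2d j)) s).
  { intros j Hj s Hs.
    destruct (Lam_der (rho j) (rhod j) (a1 j) (a1d j) (a2 j) (a2d j) t0 t1 tb m G eps Ht Hm HG Hepsc
      (HzJ j) (HrhoJ j) (HaJ j) (HbJ j Hj) s Hs) as [D C].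
    split; [|split; [|split; [|split; [exact D|exact C]]]].
    all: destruct (Rle_dec s t0) as [Hs0|Hs0].
    all: try (destruct (Lam_zero (rho j) (rhod j) (a1 j) (a1d j) (a2 j) (a2d j) t0 (HzJ j) s Hs0) as [Z1 Z2]).
    all: try (apply Rnot_le_lt in Hs0; destruct (Lam_in (rho j) (rhod j) (a1 j) (a1d j) (a2 j) (a2d j) t1 tb m G eps Hm HG Hepsc
        (HbJ j Hj) s ltac:(unfold t0, t1 in *; lra)) as [L1 [L2 [_ [L4 _]]]]).
    - rewrite Z1, Rabs_R0; lra.
    - eapply Rle_trans; [apply L1|]. apply Rmult_le_reg_r with m; auto. unfold Rdiv.
      rewrite Rmult_assoc, Rinv_l by lra. lra.
    - rewrite Z2, Rabs_R0; lra.
    - auto.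
    - unfold Phi. rewrite Z1, (proj1 (HzJ j s Hs0)). ring.
    - auto. }
  exists lam, (ww Z), (dww Z).
  split; [|split; [exact I|split]].
  -
    split.
    + exists (1 / 4). split; [lra|]. intros j Hj t Ht0. unfold lam.
      destruct (theta_range T HT t Ht0). apply (proj1 (LJ j Hj (theta T t) ltac:(unfold tb; lra))).
    + intros j Hj. exists (fun t => dLam (rho j) (rhod j) (a1 j) (a1d j) (a2 j) (a2d j) (theta T t) * thetad T t).
      split; [|split].
      * intros t Ht0. destruct (theta_range T HT t Ht0).
        destruct (LJ j Hj (theta T t) ltac:(unfold tb; lra)) as [_ [_ [_ [D _]]]].
        eapply dext. apply (is_derive_comp (Lam (rho j) (a1 j) (a2 j)) (theta T)). apply D. apply theta_der.
        intros; reflexivity. simpl. unfold scal; simpl. unfold mult; simpl. apply Rmult_comm.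
      * apply continuous_on_forall. intros t Ht0. destruct (theta_range T HT t Ht0).
        destruct (LJ j Hj (theta T t) ltac:(unfold tb; lra)) as [_ [_ [_ [D C]]]].
        apply cmult. apply (continuous_comp (theta T)). apply (dcont _ _ _ (theta_der T t)). auto.
        apply thetad_cont.
      * exists (1 / 2). split; [lra|]. intros t Ht0. destruct (theta_range T HT t Ht0).
        destruct (LJ j Hj (theta T t) ltac:(unfold tb; lra)) as [_ [L2 _]].
        destruct (thetad_bound T t). rewrite Rabs_mult, (Rabs_right (thetad T t)) by lra.
        assert (0 <= Rabs (dLam (rho j) (rhod j) (a1 j) (a1d j) (a2 j) (a2d j) (theta T t))) by apply Rabs_pos.
        nra.
  -
    intros i j Hin. destruct (Hu i j Hin) as [Hu0 [Hu1 _]].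
    assert (Hn : (M - 1 - i <= M - 2)%nat) by (unfold inner_node in Hin; lia).
    split; [|split].
    + unfold ww. rewrite (proj1 (cl_zero Z 0 _ 0 j ltac:(unfold t0; lra))). rewrite Hu0. ring.
    + unfold dww. rewrite (proj1 (cl_zero Z 0 _ 1 j ltac:(unfold t0; lra))). rewrite Hu1. ring.
    + intros t [Ht0 HtT]. destruct (u_der t i j Ht0 Hin) as [D1 [au [D2 HF]]].
      exists (au + cl Z t (M - 1 - i) 2 j). split; [|split].
      * unfold ww, dww. apply dplus. apply D1. apply (proj1 (cl_der Z (M - 1 - i)%nat 0 j t ltac:(unfold Dm; lia))).
      * unfold dww. apply dplus. apply D2. apply (proj1 (cl_der Z (M - 1 - i)%nat 1 j t ltac:(unfold Dm; lia))).
      * assert (Hth : theta T t = t) by (apply theta_le; auto).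
        unfold Aop in HF |- *. destruct (Nat.eqb i 1) eqn:Ei.
        -- apply Nat.eqb_eq in Ei. subst i. assert (Hj : (1 <= j <= N - 1)%nat) by (unfold inner_node in Hin; lia).
           destruct (LJ j Hj t ltac:(unfold tb; lra)) as [L1 [_ [L3 _]]].
           unfold lam. rewrite Hth.
           rewrite !ext_ww. pose proof (ext_cl_b Z t 0 1 j Hin) as E2. change (1 + 1)%nat with 2%nat in E2.
           rewrite E2, ext_cl_a by auto. rewrite !(ext_cl_d Z t 0 1 j) by auto.
           replace (M - 1 - 1)%nat with (M - 2)%nat in * by lia.
           rewrite Ea1, Ea2 in L3 by auto.
           apply (row1_alg h (Lam (rho j) (a1 j) (a2 j) t) (rho j t)); auto.
           unfold rho. replace (M - 1)%nat with (S (M - 2)) by lia. unfold cl, clp. rewrite col_S. unfold step. simpl. reflexivity.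
        -- apply Nat.eqb_neq in Ei. assert (Hi2 : (2 <= i)%nat) by (unfold inner_node in Hin; lia).
           rewrite !ext_ww. rewrite ext_cl_a, ext_cl_b, ext_cl_c, !(ext_cl_d Z t 0 i j) by auto.
           eapply rowi_alg; eauto.
  -
    intros i j Hin. destruct (cl_terminal Z i j Hin) as [E1 E2]. unfold ww, dww. rewrite E1, E2. split; ring.
Qed.

End Main.


Theorem theorem2p31 :
  forall (M N : nat) (h T : R) (F : R -> grid) (u0 u1 : grid) (u du : R -> grid),
    (2 <= M)%nat -> (2 <= N)%nat -> 0 < h -> 0 < T ->
    (forall i j, inner_node M N i j -> continuous_on (fun t => 0 <= t) (fun t => F t i j)) ->
    (* u is the reference state u_{phi=0} on R^+ *)
    solves_on (fun t => 0 <= t) M N h F (fun _ _ => 0) u0 u1 u du ->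
    (* discrete non-degeneracy condition *)
    (forall t, 0 < t -> forall j, (1 <= j <= N - 1)%nat ->
       / 2 * ext M N (u t) 2%nat j - 2 * ext M N (u t) 1%nat j <> 0) ->
    exists (V0 : (R -> nat -> R) -> Prop) (VZ : grid * grid -> Prop),
      nbhd0 N T V0 /\ nbhdZ M N (u T, du T) VZ /\
      forall Z, VZ Z ->
        exists (lam : R -> nat -> R) (w dw : R -> grid),
          admissible N lam /\
          V0 (fun t j => h * lam t j) /\
          solves_on (fun t => 0 <= t <= T) M N h F lam u0 u1 w dw /\
          forall i j, inner_node M N i j -> w T i j = fst Z i j /\ dw T i j = snd Z i j.
Proof.
  intros M N h T F u0 u1 u du HM HN Hh HT _ Hu Hnd.
  exact (main_concl M N h T F u0 u1 u du HM HN Hh HT Hu Hnd).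
Qed.
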